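(* Consider the ride-hailing model in the context, and let $\hat{\bm x}^A$ be an AV-first strategy, with residual demand $\hat b^C_i=b_i-\sum_j\hat x^A_{ji}$. The AV-first policy is optimal, i.e. $\sum_{i,\alpha}r^A_{i\alpha}\hat x^A_{i\alpha}+\pi(\hat{\bm b}^C)$ equals the optimal value of $\mathcal{OPT}$, if either: (i) the residual demand is fully served by CVs in the CV equilibrium, i.e. an optimal solution $\hat{\bm x}^C$ of $\mathcal{CV}(\hat{\bm b}^C)$ satisfies $\sum_j\hat x^C_{ji}=\hat b^C_i$ for all $i$; or (ii) there exists $\bm x^A\in\mathbb R^{L\times L}_{\ge0}$ satisfying flow balance and $\sum_{i,\alpha}\tau^{dr}_{i\alpha}x^A_{i\alpha}\le M$ with $\sum_j x^A_{ji}=b_i$ for all $i$.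
   Context: Model. There are $L$ regions $\{1,\dots,L\}$. For regions $i,j$, $b_{ij}\ge0$ is the customer rate from $i$ to $j$; $b_i=\sum_j b_{ij}$ (assumed $>0$), $q_{ij}=b_{ij}/b_i$. Travel times satisfy $t_{ij}>0$ for $i\ne j$, $t_{ii}=0$. Constants: $p>0$, $c\ge0$, $R\in(0,1)$, CV fleet mass $N>0$, AV fleet mass $M\ge0$. For $i,\alpha$: $\tau^{dr}_{i\alpha}=t_{i\alpha}+\sum_j q_{\alpha j}t_{\alpha j}$, $r^A_{i\alpha}=p\sum_j q_{\alpha j}t_{\alpha j}-c\tau^{dr}_{i\alpha}$, $r^C_{i\alpha}=p(1-R)\sum_j q_{\alpha j}t_{\alpha j}-c\tau^{dr}_{i\alpha}$, $r^{C2P}_{i\alpha}=pR\sum_j q_{\alpha j}t_{\alpha j}$. A matrix $\bm x\in\mathbb R^{L\times L}_{\ge0}$ satisfies flow balance if $\sum_j(\sum_k x_{kj})q_{ji}=\sum_\alpha x_{i\alpha}$ for all $i$. $\mathcal{CV}(\bm b^C)$: maximize $N\log\sum_{i,\alpha}r^C_{i\alpha}x_{i\alpha}-\sum_{i,\alpha}\tau^{dr}_{i\alpha}x_{i\alpha}$ over $\bm x\ge0$ satisfying flow balance and $\sum_j x_{ji}\le b^C_i$ for all $i$; $\pi(\bm b^C)=\sum_{i,\alpha}r^{C2P}_{i\alpha}x_{i\alpha}$ for an optimal solution $\bm x$ (same for all optimal solutions). $\mathcal{OPT}$: maximize $\sum_{i,\alpha}r^A_{i\alpha}x^A_{i\alpha}+\pi(\bm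 b^C)$ over $\bm b^C\in\mathbb R^L_{\ge0}$, $\bm x^A\in\mathbb R^{L\times L}_{\ge0}$ subject to $\sum_j x^A_{ji}+b^C_i\le b_i$ for all $i$, flow balance for $\bm x^A$, and $\sum_{i,\alpha}\tau^{dr}_{i\alpha}x^A_{i\alpha}\le M$. AV-first policy: an AV-first strategy $\hat{\bm x}^A$ is an optimal solution of $\mathcal{OPT}$ with $\bm b^C$ fixed to $\bm 0$, i.e. it maximizes $\sum_{i,\alpha}r^A_{i\alpha}x^A_{i\alpha}$ over $\bm x^A\ge0$ with $\sum_j x^A_{ji}\le b_i$ for all $i$, flow balance, and $\sum_{i,\alpha}\tau^{dr}_{i\alpha}x^A_{i\alpha}\le M$; the remaining demand $\hat{\bm b}^C$ is then revealed to CVs, giving platform profit $\sum_{i,\alpha}r^A_{i\alpha}\hat x^A_{i\alpha}+\pi(\hat{\bm b}^C)$. *)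

(* Defs.v *)
From HB Require Import structures.
From mathcomp Require Import all_boot all_order all_algebra.
From mathcomp Require Import all_classical all_reals.
From mathcomp Require Import ereal exp.
Set Implicit Arguments. Unset Strict Implicit. Unset Printing Implicit Defensive.
Import Order.TTheory GRing.Theory Num.Theory.
Local Open Scope ring_scope.

Section Model.
Variables (R : realType) (L : nat).
Notation mat := ('I_L -> 'I_L -> R).
Variables (b t : mat) (p c Rc N M : R).

Definition brate (i : 'I_L) : R := \sum_(j < L) b i j.
Definition q (i j : 'I_L) : R := b i j / brate i.
Definition Dbar (a : 'I_L) : R := \sum_(j < L) q a j * t a j.
Definition tau (i a : 'I_L) : R := t i a + Dbar a.
Definition rA (i a : 'I_L) : R := p * Dbar a - c * tau i a.
Definition rC (i a : 'I_L) : R := p * (1 - Rc) * Dbar a - c * tau i a.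
Definition rC2P (i a : 'I_L) : R := p * Rc * Dbar a.

Definition lin (w x : mat) : R := \sum_(i < L) \sum_(a < L) w i a * x i a.
Definition inflow (x : mat) (i : 'I_L) : R := \sum_(j < L) x j i.
Definition nonneg (x : mat) : Prop := forall i a, 0 <= x i a.
Definition flow_balance (x : mat) : Prop :=
  forall i, \sum_(j < L) (\sum_(k < L) x k j) * q j i = \sum_(a < L) x i a.

Definition CV_feasible (bC : 'I_L -> R) (x : mat) : Prop :=
  nonneg x /\ flow_balance x /\ forall i, inflow x i <= bC i.
(* Objective of CV, in the extended reals, with the convention log y = -oo
   for y <= 0. *)
Definition CV_obj (x : mat) : \bar R :=
  if 0 < lin rC x then ((N * ln (lin rC x) - lin tau x)%:E)%E else (-oo)%E.
Definition CV_opt (bC : 'I_L -> R) (x : mat) : Prop :=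
  CV_feasible bC x /\ forall y, CV_feasible bC y -> (CV_obj y <= CV_obj x)%E.
(* platform profit from CVs, pi(bC), computed from an optimal solution x *)
Definition piCV (x : mat) : R := lin rC2P x.

Definition OPT_feasible (bC : 'I_L -> R) (xA : mat) : Prop :=
  (forall i, 0 <= bC i) /\ nonneg xA /\
  (forall i, inflow xA i + bC i <= brate i) /\
  flow_balance xA /\ lin tau xA <= M.

Definition AV_first (xA : mat) : Prop :=
  OPT_feasible (fun _ => 0) xA /\
  forall y, OPT_feasible (fun _ => 0) y -> lin rA y <= lin rA xA.

Definition residual (xA : mat) (i : 'I_L) : R := brate i - inflow xA i.

End Model.

(* Main.v *)
Require Import Defs.
From HB Require Import structures.
From mathcomp Require Import all_boot all_order all_algebra.
From mathcomp Require Import all_classical all_reals.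
From mathcomp Require Import ereal exp.
From mathcomp Require Import ring lra.
Set Implicit Arguments. Unset Strict Implicit. Unset Printing Implicit Defensive.
Import Order.TTheory GRing.Theory Num.Theory.
Local Open Scope ring_scope.

Section H.
Variables (R : realType) (L : nat).
Notation mat := ('I_L -> 'I_L -> R).
Variables (b t : mat) (p c Rc N M : R).

Definition Dw (i a : 'I_L) : R := Dbar b t a.
Definition comb (al be : R) (x y : mat) : mat := fun i a => al * x i a + be * y i a.

Lemma lin_comb (w : mat) al be x y :
  lin w (comb al be x y) = al * lin w x + be * lin w y.
Proof.
rewrite /lin /comb !mulr_sumr -big_split; apply eq_bigr => i _.
rewrite !mulr_sumr -big_split; apply eq_bigr => a _ /=; ring.
Qed.

Lemma inflow_comb al be x y i :
  inflow (comb al be x y) i = al * inflow x i + be * inflow y i.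
Proof. by rewrite /inflow /comb big_split /= -!mulr_sumr. Qed.

Lemma nonneg_comb al be x y : 0 <= al -> 0 <= be -> nonneg x -> nonneg y ->
  nonneg (comb al be x y).
Proof.
move=> ha hb hx hy i a; rewrite /comb.
by apply: addr_ge0; apply: mulr_ge0.
Qed.

Lemma fb_comb al be x y : flow_balance b x -> flow_balance b y ->
  flow_balance b (comb al be x y).
Proof.
move=> hx hy i.
transitivity (\sum_(j < L) (al * ((\sum_(k < L) x k j) * q b j i)
                           + be * ((\sum_(k < L) y k j) * q b j i))).
  apply: eq_bigr => j _.
  have -> : \sum_(k < L) comb al be x y k j
          = al * \sum_(k < L) x k j + be * \sum_(k < L) y k j.
    by rewrite /comb big_split /= -!mulr_sumr.
  ring.
rewrite big_split /= -!mulr_sumr hx hy /comb big_split /= -!mulr_sumr.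
done.
Qed.

Lemma lin_rA x : lin (rA b t p c) x = p * lin Dw x - c * lin (tau b t) x.
Proof.
rewrite /lin /rA /Dw !mulr_sumr -sumrB; apply eq_bigr => i _.
rewrite !mulr_sumr -sumrB; apply eq_bigr => a _; ring.
Qed.

Lemma lin_rC x : lin (rC b t p c Rc) x = p * (1 - Rc) * lin Dw x - c * lin (tau b t) x.
Proof.
rewrite /lin /rC /Dw !mulr_sumr -sumrB; apply eq_bigr => i _.
rewrite !mulr_sumr -sumrB; apply eq_bigr => a _; ring.
Qed.

Lemma lin_pi x : piCV b t p Rc x = p * Rc * lin Dw x.
Proof.
rewrite /piCV /lin /rC2P /Dw !mulr_sumr; apply eq_bigr => i _.
rewrite !mulr_sumr; apply eq_bigr => a _; ring.
Qed.

Lemma lin_Dw_inflow x : lin Dw x = \sum_(a < L) Dbar b t a * inflow x a.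
Proof.
rewrite /lin /Dw /inflow exchange_big; apply eq_bigr => a _.
by rewrite mulr_sumr.
Qed.

Lemma lin0 (w : mat) : lin w (fun _ _ => 0) = 0.
Proof. by rewrite /lin big1 // => i _; rewrite big1 // => a _; rewrite mulr0. Qed.

Hypothesis hb : forall i j, 0 <= b i j.
Hypothesis hbr : forall i, 0 < brate b i.
Hypothesis ht : forall i j, i != j -> 0 < t i j.
Hypothesis htt : forall i, t i i = 0.

Lemma Dbar_ge0 a : 0 <= Dbar b t a.
Proof.
rewrite /Dbar; apply: sumr_ge0 => j _; apply: mulr_ge0.
  by rewrite /q; apply: divr_ge0 => //; apply: ltW.
by case: (eqVneq a j) => [->|/ht/ltW //]; rewrite htt.
Qed.

Lemma inflow_ge0 (x : mat) i : nonneg x -> 0 <= inflow x i.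
Proof. by move=> hx; apply: sumr_ge0 => j _. Qed.

Lemma Dw_ge0 (x : mat) : nonneg x -> 0 <= lin Dw x.
Proof.
move=> hx; rewrite lin_Dw_inflow; apply: sumr_ge0 => a _.
by apply: mulr_ge0; [apply: Dbar_ge0 | apply: inflow_ge0].
Qed.

Lemma Dw_le (x : mat) (v : 'I_L -> R) : (forall a, inflow x a <= v a) ->
  lin Dw x <= \sum_(a < L) Dbar b t a * v a.
Proof.
move=> hv; rewrite lin_Dw_inflow; apply: ler_sum => a _.
by apply: ler_wpM2l; [apply: Dbar_ge0 | apply: hv].
Qed.

End H.

Lemma CV_zero (R : realType) (L : nat) (b t : 'I_L -> 'I_L -> R) (p c Rc N : R)
  (bC : 'I_L -> R) (x : 'I_L -> 'I_L -> R) :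
  (forall i, 0 <= bC i) -> CV_opt b t p c Rc N bC x ->
  ~~ (0 < lin (rC b t p c Rc) x) -> CV_opt b t p c Rc N bC (fun _ _ => 0).
Proof.
move=> hbC [hf hopt] hneg; split.
  split; first by move=> i a.
  split; first by move=> i; rewrite !big1 // => j _; rewrite ?big1 ?mul0r.
  by move=> i; rewrite /inflow big1.
move=> y hy; have := hopt y hy.
by rewrite {2}/CV_obj (negbTE hneg) /CV_obj lin0 ltxx.
Qed.

Lemma pi0 (R : realType) (L : nat) (b t : 'I_L -> 'I_L -> R) (p Rc : R) :
  piCV b t p Rc (fun _ _ => 0) = 0.
Proof. by rewrite /piCV lin0. Qed.
Theorem proposition6 (R : realType) (L : nat) (b t : 'I_L -> 'I_L -> R)
    (p c Rc N M : R) :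
  (forall i j, 0 <= b i j) ->
  (forall i, 0 < brate b i) ->
  (forall i j, i != j -> 0 < t i j) ->
  (forall i, t i i = 0) ->
  0 < p -> 0 <= c -> 0 < Rc < 1 -> 0 < N -> 0 <= M ->
  (* standing claim of the model: pi(bC) does not depend on the chosen
     optimal solution of CV(bC) *)
  (forall (bC : 'I_L -> R) x y, (forall i, 0 <= bC i) ->
     CV_opt b t p c Rc N bC x -> CV_opt b t p c Rc N bC y ->
     piCV b t p Rc x = piCV b t p Rc y) ->
  forall xhA : 'I_L -> 'I_L -> R,
  AV_first b t p c M xhA ->
  ((exists xhC, CV_opt b t p c Rc N (residual b xhA) xhC /\
                forall i, inflow xhC i = residual b xhA i)
   \/
   (exists xA, nonneg xA /\ flow_balance b xA /\ lin (tau b t) xA <= M /\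
               forall i, inflow xA i = brate b i)) ->
  forall xhC, CV_opt b t p c Rc N (residual b xhA) xhC ->
  forall (bC : 'I_L -> R) (xA xC : 'I_L -> 'I_L -> R),
    OPT_feasible b t M bC xA -> CV_opt b t p c Rc N bC xC ->
    lin (rA b t p c) xA + piCV b t p Rc xC
      <= lin (rA b t p c) xhA + piCV b t p Rc xhC.
Proof.
move=> hb hbr ht htt hp hc /andP[hR0 hR1] hN hM huniq xhA [hfh hopt] hcase
  xhC hxhC bC xA xC [hbC [hxA [hinA [hfbA htauA]]]] hxC.
case: hfh => _ [hxh [hinh [hfbh htauh]]].
have hxCn : nonneg xC := hxC.1.1.
have hfbC : flow_balance b xC := hxC.1.2.1.
have hinC : forall i, inflow xC i <= bC i := hxC.1.2.2.
have hxhCn : nonneg xhC := hxhC.1.1.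
have mkAV : forall x, nonneg x -> flow_balance b x ->
    (forall i, inflow x i <= brate b i) -> lin (tau b t) x <= M ->
    lin (rA b t p c) x <= lin (rA b t p c) xhA.
  move=> x h1 h2 h3 h4; apply: hopt; split; first by move=> i; exact: lexx.
  split=> //; split; last by split.
  by move=> i; rewrite addr0.
have hinA' : forall i, inflow xA i <= brate b i.
  by move=> i; have := hinA i; have := hbC i; lra.
have hinh' : forall i, inflow xhA i <= brate b i.
  by move=> i; have := hinh i; lra.
have hAh := mkAV xA hxA hfbA hinA' htauA.
have hpR : 0 < p * Rc by apply: mulr_gt0.
have hpih : 0 <= piCV b t p Rc xhC.
  rewrite lin_pi; apply: mulr_ge0; first exact: ltW.
  exact: (Dw_ge0 hb hbr ht htt hxhCn).
have [hsC|hsC] := boolP (0 < lin (rC b t p c Rc) xC); last first.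
  have hz := CV_zero hbC hxC hsC.
  rewrite (huniq bC xC _ hbC hxC hz) pi0; lra.
pose Db := \sum_(a < L) Dbar b t a * brate b a.
have hpiC : piCV b t p Rc xC <= p * Rc * (Db - lin (Dw b t) xA).
  rewrite lin_pi; apply: ler_wpM2l; first exact: ltW.
  have -> : Db - lin (Dw b t) xA
          = \sum_(a < L) Dbar b t a * (brate b a - inflow xA a).
    rewrite lin_Dw_inflow /Db -sumrB; apply: eq_bigr => a _; ring.
  apply: (Dw_le hb hbr ht htt) => a.
  by have := hinC a; have := hinA a; lra.
pose y := comb 1 1 xA xC.
have hyn : nonneg y by apply: nonneg_comb.
have hyfb : flow_balance b y by apply: fb_comb.
have hyin : forall i, inflow y i <= brate b i.
  move=> i; rewrite inflow_comb; have := hinC i; have := hinA i; lra.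
have hrAy : lin (rA b t p c) y = lin (rA b t p c) xA + lin (rA b t p c) xC.
  by rewrite lin_comb !mul1r.
have htauy : lin (tau b t) y = lin (tau b t) xA + lin (tau b t) xC.
  by rewrite lin_comb !mul1r.
have hDy : lin (Dw b t) y <= Db by apply: (Dw_le hb hbr ht htt).
have hCy : lin (rA b t p c) xA + piCV b t p Rc xC < lin (rA b t p c) y.
  rewrite hrAy lin_pi; have := lin_rA b t p c xC; have := lin_rC b t p c Rc xC.
  lra.
case: (lerP (lin (tau b t) y) M) => hty.
  by have := mkAV y hyn hyfb hyin hty; lra.
case: hcase => [[xt [hxt hfull]] | [xf [hxf [hfbf [htauf hfullf]]]]]; last first.
  have hf := mkAV xf hxf hfbf (fun i => ltac:(by rewrite hfullf)) htauf.
  have hDf : lin (Dw b t) xf = Db.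
    by rewrite lin_Dw_inflow /Db; apply: eq_bigr => a _; rewrite hfullf.
  have h1 : p * lin (Dw b t) y <= p * lin (Dw b t) xf.
    by apply: ler_wpM2l; [exact: ltW | rewrite hDf].
  have h2 : c * lin (tau b t) xf <= c * lin (tau b t) y.
    by apply: ler_wpM2l => //; lra.
  have := lin_rA b t p c y; have := lin_rA b t p c xf; lra.
have hres : forall i, 0 <= residual b xhA i.
  by move=> i; rewrite /residual subr_ge0.
have hpeq : piCV b t p Rc xhC = piCV b t p Rc xt := huniq _ _ _ hres hxhC hxt.
have hxtn : nonneg xt := hxt.1.1.
have hfbt : flow_balance b xt := hxt.1.2.1.
have hpit : piCV b t p Rc xt = p * Rc * (Db - lin (Dw b t) xhA).
  rewrite lin_pi; congr (_ * _).
  rewrite !lin_Dw_inflow /Db -sumrB; apply: eq_bigr => a _.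
  rewrite hfull /residual; ring.
have [hst|hst] := boolP (0 < lin (rC b t p c Rc) xt); last first.
  have hz := CV_zero hres hxt hst.
  have h0 : p * Rc * (Db - lin (Dw b t) xhA) = 0.
    by rewrite -hpit (huniq _ _ _ hres hxt hz) pi0.
  have hDb : Db = lin (Dw b t) xhA.
    by move/eqP: h0; rewrite mulf_eq0 (gt_eqF hpR) /= subr_eq0 => /eqP.
  have h1 : p * lin (Dw b t) y <= p * lin (Dw b t) xhA.
    by apply: ler_wpM2l; [exact: ltW | rewrite -hDb].
  have h2 : c * lin (tau b t) xhA <= c * lin (tau b t) y.
    by apply: ler_wpM2l => //; lra.
  have := lin_rA b t p c y; have := lin_rA b t p c xhA; lra.
pose yh := comb 1 1 xhA xt.
have hyhn : nonneg yh by apply: nonneg_comb.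
have hyhfb : flow_balance b yh by apply: fb_comb.
have hyhin : forall i, inflow yh i = brate b i.
  by move=> i; rewrite inflow_comb hfull /residual; ring.
have hrAyh : lin (rA b t p c) yh = lin (rA b t p c) xhA + lin (rA b t p c) xt.
  by rewrite lin_comb !mul1r.
have htauyh : lin (tau b t) yh = lin (tau b t) xhA + lin (tau b t) xt.
  by rewrite lin_comb !mul1r.
have hDt : 0 <= lin (Dw b t) xt := Dw_ge0 hb hbr ht htt hxtn.
have hpDt : 0 <= p * Rc * lin (Dw b t) xt by apply: mulr_ge0 => //; exact: ltW.
have hyhM : M < lin (tau b t) yh.
  rewrite ltNge; apply/negP => hle.
  have := mkAV yh hyhn hyhfb (fun i => ltac:(by rewrite hyhin)) hle.
  rewrite hrAyh; have := lin_rA b t p c xt; have := lin_rC b t p c Rc xt.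
  lra.
have hK : 0 < lin (tau b t) yh - lin (tau b t) xA by lra.
have [mu [hmu0 [hmu1 hmuK]]] : exists mu, 0 <= mu /\ mu < 1 /\
    mu * (lin (tau b t) yh - lin (tau b t) xA) = M - lin (tau b t) xA.
  exists ((M - lin (tau b t) xA) / (lin (tau b t) yh - lin (tau b t) xA)).
  split; first by apply: divr_ge0; lra.
  split; first by rewrite ltr_pdivrMr // mul1r; lra.
  by rewrite divfK // gt_eqF.
pose w := comb (1 - mu) mu xA yh.
have hwn : nonneg w by apply: nonneg_comb => //; lra.
have hwfb : flow_balance b w by apply: fb_comb.
have hwin : forall i, inflow w i <= brate b i.
  move=> i; rewrite inflow_comb hyhin.
  have : (1 - mu) * inflow xA i <= (1 - mu) * brate b i.
    by apply: ler_wpM2l; [lra | exact: hinA'].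
  lra.
have htw : (1 - mu) * lin (tau b t) xA
           + mu * (lin (tau b t) xhA + lin (tau b t) xt) = M.
  rewrite -htauyh; lra.
have hwtau : lin (tau b t) w <= M by rewrite lin_comb htauyh htw.
have hw := mkAV w hwn hwfb hwin hwtau.
rewrite lin_comb hrAyh in hw.
have hcw := congr1 (fun z => c * z) htw; simpl in hcw.
have H1 : p * (1 - mu) * (lin (Dw b t) xA - lin (Dw b t) xhA)
          <= c * (M - lin (tau b t) xhA) - p * mu * lin (Dw b t) xt.
  move: hw; rewrite !lin_rA; lra.
have hR1' : 0 <= 1 - Rc by lra.
have H1' := ler_wpM2l hR1' H1.
have hmus : 0 <= mu * lin (rC b t p c Rc) xt by apply: mulr_ge0 => //; exact: ltW.
rewrite lin_rC in hmus.
have hRcM : 0 <= Rc * c * (M - lin (tau b t) xhA).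
  by apply: mulr_ge0; [apply: mulr_ge0 => //; exact: ltW | lra].
have key : (1 - mu) * ((p * (1 - Rc) * lin (Dw b t) xA - c * lin (tau b t) xA)
            - (p * (1 - Rc) * lin (Dw b t) xhA - c * lin (tau b t) xhA)) <= 0.
  lra.
rewrite pmulr_rle0 in key; last by lra.
rewrite hpeq hpit.
have := lin_rA b t p c xA; have := lin_rA b t p c xhA.
lra.
Qed.
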